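(* Let $X=\{1,\dots,n\}$ with $n\ge2$, $Y$ a finite set, and $Q=(q(y,y'))$ a symmetric irreducible stochastic matrix on $Y$ with distinct eigenvalues $\lambda_0=1,\lambda_1,\dots,\lambda_m$ and eigenspaces $W_0,\dots,W_m$ (notation in context). Let $1\le h\le n-1$, $0<p_0<1$, and let $P=p_0M+(1-p_0)\frac{\Delta_h}{h(n-h)|Y|}$ be the second crested product on $L(\Theta_h)$. Let $\underline a=(a_0,\dots,a_m)$ be a type with $a_0+\cdots+a_m=h$ and let $k$ be an integer with $\ell(\underline a)\le k\le h$. Then every $F\in P_{h,\underline a,k}$ satisfies $PF=\mu F$ with $$\mu=p_0\cdot\frac1h\sum_{j=0}^ma_j\lambda_j+(1-p_0)\frac{(n+\ell(\underline a)-k-h)(h-k+1)-(n-h)}{h(n-h)}.$$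
   Context: $Q$ acts on $L(Y)$ by $(Qf)(y)=\sum_{y'}q(y,y')f(y')$; $W_0$ is the space of constant functions and $W_j$ the eigenspace of $\lambda_j$. For $0\le k\le n$, $\Theta_k$ is the set of functions $\theta$ with $\mathrm{dom}(\theta)$ a $k$-subset of $X$ and values in $Y$ ($\Theta_0$ = empty function); $\varphi\subseteq\theta$ means $\mathrm{dom}\varphi\subseteq\mathrm{dom}\theta$ and $\theta|_{\mathrm{dom}\varphi}=\varphi$. Operators on $L(\Theta_h)$: $(MF)(\theta)=\frac1h\sum_{j\in\mathrm{dom}\theta}\sum_{y\in Y}q(\theta(j),y)F(\theta_{j\to y})$, where $\theta_{j\to y}$ equals $\theta$ except that its value at $j$ is $y$; $(\Delta_hF)(\theta)=\sum F(\varphi)$ over all $\varphi\in\Theta_h$ with $|\mathrm{dom}\varphi\cap\mathrm{dom}\theta|=h-1$ and $\varphi=\theta$ on $\mathrm{dom}\varphi\cap\mathrm{dom}\theta$ (each row of $\Delta_h$ has $h(n-h)|Y|$ nonzero entries). For $1\le k\le n$: $D_k:L(\Theta_k)\to L(\Theta_{k-1})$, $(D_kF)(\varphi)=\sum_{\theta\in\Theta_k:\theta\supseteq\varphi}F(\theta)$, and $D_k^*:L(\Theta_{k-1})\to L(\Theta_k)$, $(D_k^*F)(\theta)=\sum_{\varphi\subseteq\theta}F(\varphi)$; $D_0:=0$. Types $\underline c=(c_0,\dots,c_m)$ of nonnegative integers, $|\underline c|=\sum c_i$, $\ell(\underline c)=c_1+\cdots+c_m$, $\underline c'=(c_0-1,c_1,\dots,c_m)$.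 A fundamental function of type $\underline c$ on $A\subseteq X$, $|A|=|\underline c|$, is $F=\bigotimes_{j\in A}F^j$ ($F(\theta)=\prod_{j\in A}F^j(\theta(j))$ if $\mathrm{dom}\theta=A$, $0$ otherwise) with each $F^j$ in some $W_{i_j}$ and exactly $c_i$ indices with $i_j=i$; $P_{k,\underline c,A}$ is their span, $P_{k,\underline c}=\bigoplus_{|A|=k}P_{k,\underline c,A}$ ($\{0\}$ if an entry is negative). $D_{k,\underline c}=D_k|_{P_{k,\underline c}}$, $D^*_{k,\underline c}=D^*_k|_{P_{k-1,\underline c'}}$. For $|\underline c|=k$: $P_{k,\underline c,k}=\ker D_{k,\underline c}$; for $k<h\le n$, $|\underline c|=h$, $\ell(\underline c)\le k$: $P_{h,\underline c,k}=D^*_{h,\underline c}(P_{h-1,\underline c',k})$. *)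

(* Defs.v *)
From HB Require Import structures.
From mathcomp Require Import all_boot all_order all_algebra.
From mathcomp Require Import reals.
Set Implicit Arguments. Unset Strict Implicit. Unset Printing Implicit Defensive.
Import Order.TTheory GRing.Theory Num.Theory.
Local Open Scope ring_scope.

Section Crested.
Variables (R : realType) (n : nat) (Y : finType) (q : Y -> Y -> R).

Definition symmetric_kernel := forall y y', q y y' = q y' y.
Definition stochastic_kernel :=
  (forall y y', 0 <= q y y') /\ (forall y, \sum_(y' : Y) q y y' = 1).
Fixpoint qpow (t : nat) (y y' : Y) : R :=
  match t with
  | O => (y == y')%:R
  | S t' => \sum_(z : Y) q y z * qpow t' z y'
  end.
Definition irreducible_kernel := forall y y', exists t, 0 < qpow t y y'.

Definition Qop (f : Y -> R) : Y -> R := fun y => \sum_(y' : Y) q y y' * f y'.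
Definition is_eigenvalue (l : R) := exists f : Y -> R,
  (exists y, f y != 0) /\ forall y, Qop f y = l * f y.

(* Partial functions X -> Y, X = 'I_n; Theta_k = those with k-element domain *)
Definition pfun := {ffun 'I_n -> option Y}.
Definition dom (t : pfun) : {set 'I_n} := [set j | t j != None].
Definition psub (phi t : pfun) : bool :=
  (dom phi \subset dom t) && [forall j in dom phi, phi j == t j].
Definition pupd (t : pfun) (j : 'I_n) (y : Y) : pfun :=
  [ffun i => if i == j then Some y else t i].

(* operators on L(Theta_h) (functions are taken as pfun -> R, vanishing
   outside the relevant Theta_k) *)
Definition Mop (h : nat) (F : pfun -> R) : pfun -> R := fun t =>
  if #|dom t| == h then
    h%:R^-1 * \sum_(j in dom t) \sum_(y : Y) oapp (fun y0 => q y0 y) 0 (t j) * F (pupd t j y)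
  else 0.
Definition Deltaop (h : nat) (F : pfun -> R) : pfun -> R := fun t =>
  if #|dom t| == h then
    \sum_(phi : pfun | [&& #|dom phi| == h, #|dom phi :&: dom t| == h.-1 &
                          [forall j in dom phi :&: dom t, phi j == t j]]) F phi
  else 0.
Definition Dop (k : nat) (F : pfun -> R) : pfun -> R := fun phi =>
  if k == 0%N then 0 else
  if #|dom phi| == k.-1 then
    \sum_(t : pfun | (#|dom t| == k) && psub phi t) F t
  else 0.
Definition Dstar (k : nat) (F : pfun -> R) : pfun -> R := fun t =>
  if #|dom t| == k then
    \sum_(phi : pfun | (#|dom phi| == k.-1) && psub phi t) F phi
  else 0.
Definition crestedP (h : nat) (p0 : R) (F : pfun -> R) : pfun -> R := fun t =>
  p0 * Mop h F t
  + (1 - p0) * ((h * (n - h) * #|Y|)%:R)^-1 * Deltaop h F t.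

Variables (m : nat) (lam : 'I_m.+1 -> R).
Definition W (i : 'I_m.+1) (f : Y -> R) := forall y, Qop f y = lam i * f y.

Definition ell (c : 'I_m.+1 -> nat) : nat := (\sum_(i < m.+1 | i != ord0) c i)%N.
Definition type_size (c : 'I_m.+1 -> nat) : nat := (\sum_(i < m.+1) c i)%N.
Definition tdecr (c : 'I_m.+1 -> nat) : 'I_m.+1 -> nat :=
  fun i => if i == ord0 then (c i).-1 else c i.

Definition fundamental (c : 'I_m.+1 -> nat) (A : {set 'I_n}) (F : pfun -> R) :=
  exists (iota : 'I_n -> 'I_m.+1) (Fj : 'I_n -> Y -> R),
    (forall j, j \in A -> W (iota j) (Fj j)) /\
    (forall i, #|[set j in A | iota j == i]| = c i) /\
    (forall t, F t = if dom t == A then \prod_(j in A) oapp (Fj j) 0 (t j) else 0).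

Definition span (S : (pfun -> R) -> Prop) (F : pfun -> R) :=
  exists (N : nat) (coef : 'I_N -> R) (G : 'I_N -> pfun -> R),
    (forall i, S (G i)) /\ forall t, F t = \sum_(i < N) coef i * G i t.

Definition Ptype (k : nat) (c : 'I_m.+1 -> nat) : (pfun -> R) -> Prop :=
  span (fun F => exists A : {set 'I_n}, #|A| = k /\ fundamental c A F).

(* Pdef k d c = P_{k+d, c, k} (for |c| = k+d, ell c <= k) *)
Fixpoint Pdef (k d : nat) (c : 'I_m.+1 -> nat) (F : pfun -> R) : Prop :=
  match d with
  | O => Ptype k c F /\ forall phi, Dop k F phi = 0
  | S d' =>
      if c ord0 == 0%N then forall t, F t = 0   (* P_{h-1,c'} = {0} *)
      else exists G, Pdef k d' (tdecr c) G /\ forall t, F t = Dstar (k + d) G t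
  end.
Definition Phck (h : nat) (c : 'I_m.+1 -> nat) (k : nat) := Pdef k (h - k) c.

End Crested.

(* Main.v *)
Require Import Defs.
From HB Require Import structures.
From mathcomp Require Import all_boot all_order all_algebra.
From mathcomp Require Import reals ring zify.
From Stdlib Require Import FunctionalExtensionality.
Set Implicit Arguments. Unset Strict Implicit. Unset Printing Implicit Defensive.
Import Order.TTheory GRing.Theory Num.Theory.
Local Open Scope ring_scope.

Section Comb.
Variables (R : realType) (n : nat) (Y : finType).
Local Notation pf := (pfun n Y).

Definition prem (t : pf) (i : 'I_n) : pf := [ffun x => if x == i then None else t x].

Lemma in_dom (t : pf) x : (x \in dom t) = (t x != None).
Proof. by rewrite inE. Qed.

Lemma dom_prem (t : pf) i : dom (prem t i) = dom t :\ i.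
Proof. by apply/setP => x; rewrite /dom !inE ffunE; case: ifP => [/eqP ->|]; rewrite ?eqxx. Qed.

Lemma dom_pupd (t : pf) j y : dom (pupd t j y) = j |: dom t.
Proof. by apply/setP => x; rewrite /dom !inE ffunE; case: ifP => [/eqP ->|]; rewrite ?eqxx. Qed.

Lemma prem_pupd_same (t : pf) j y : prem (pupd t j y) j = prem t j.
Proof. by apply/ffunP => x; rewrite !ffunE; case: (x == j). Qed.

Lemma prem_pupdC (t : pf) i j y : i != j -> prem (pupd t j y) i = pupd (prem t i) j y.
Proof.
move=> ij; apply/ffunP => x; rewrite !ffunE.
case: (eqVneq x i) => [->|xi]; last by [].
by rewrite (negbTE ij).
Qed.

Lemma pupd_prem_same (t : pf) i y : pupd (prem t i) i y = pupd t i y.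
Proof. by apply/ffunP => x; rewrite !ffunE; case: (x == i). Qed.

Lemma prem_notin (t : pf) i : i \notin dom t -> prem t i = t.
Proof.
rewrite in_dom negbK => /eqP ti; apply/ffunP => x; rewrite !ffunE.
by case: (eqVneq x i) => [->|].
Qed.

Lemma dom_pupd_in (t : pf) j y : j \in dom t -> dom (pupd t j y) = dom t.
Proof. by move=> jt; rewrite dom_pupd; apply/setUidPr; rewrite sub1set. Qed.

End Comb.

Section Sums.
Variables (R : realType) (n : nat) (Y : finType).
Local Notation pf := (pfun n Y).

Lemma sum_bij (I J : finType) (P : pred I) (Q : pred J) (f : J -> I) (X : I -> R) :
  {in Q &, injective f} -> (forall j, Q j -> P (f j)) ->
  (forall i, P i -> exists2 j, Q j & i = f j) ->
  \sum_(i | P i) X i = \sum_(j | Q j) X (f j).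
Proof.
move=> inj fP Pf.
transitivity (\sum_(i in f @: [set j | Q j]) X i).
  apply: eq_bigl => i; apply/idP/imsetP => [/Pf [j Qj ->]|[j]].
    by exists j; rewrite ?inE.
  by rewrite inE => Qj ->; apply: fP.
rewrite big_imset; last by move=> x y; rewrite !inE; apply: inj.
by apply: eq_bigl => j; rewrite inE.
Qed.

Lemma notin_None (t : pf) x : x \notin dom t -> t x = None.
Proof. by rewrite in_dom negbK => /eqP. Qed.

Lemma in_Some (t : pf) x : x \in dom t -> exists y, t x = Some y.
Proof. by rewrite in_dom; case: (t x) => // y _; exists y. Qed.

Lemma SubSum (X : pf -> R) (t : pf) j : #|dom t| = j.+1 ->
  \sum_(phi : pf | (#|dom phi| == j) && psub phi t) X phi = \sum_(i in dom t) X (prem t i).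
Proof.
move=> ct; apply: sum_bij.
- move=> i1 i2 i1t i2t /ffunP /(_ i1); rewrite !ffunE eqxx.
  case: (eqVneq i1 i2) => // _ /esym ti1; by move: i1t; rewrite in_dom ti1.
- move=> i it; rewrite /psub dom_prem; apply/andP; split.
    by move: ct; rewrite (cardsD1 i) it add1n => -[->].
  apply/andP; split; first exact: subD1set.
  apply/forallP => x; apply/implyP; rewrite !inE => /andP [xi _].
  by rewrite ffunE (negbTE xi).
- move=> phi /andP [/eqP cphi /andP [sub /forallP agree]].
  have : #|dom t :\: dom phi| == 1%N.
    by rewrite cardsD (setIidPr sub) ct cphi subSnn.
  move=> /cards1P [i Di].
  have : i \in dom t :\: dom phi by rewrite Di set11.
  rewrite inE => /andP [iphi it]; exists i => //.
  apply/ffunP => x; rewrite ffunE.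
  case: (eqVneq x i) => [->|xi]; first exact: notin_None.
  case: (boolP (x \in dom phi)) => xphi; first by move/implyP: (agree x) => /(_ xphi) /eqP.
  rewrite (notin_None xphi); symmetry; apply: notin_None; apply/negP => xt.
  have : x \in dom t :\: dom phi by rewrite inE xphi xt.
  by rewrite Di inE (negbTE xi).
Qed.

Lemma SupSum (X : pf -> R) (t : pf) j : #|dom t| = j ->
  \sum_(psi : pf | (#|dom psi| == j.+1) && psub t psi) X psi =
  \sum_(x | x \notin dom t) \sum_(y : Y) X (pupd t x y).
Proof.
move=> ct; rewrite pair_big_dep.
rewrite (eq_bigl (fun p : 'I_n * Y => p.1 \notin dom t)); last by move=> p; rewrite andbT.
apply: sum_bij.
- move=> [x1 y1] [x2 y2] /= x1t x2t /ffunP /(_ x1); rewrite !ffunE eqxx.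
  case: (eqVneq x1 x2) => [->|_]; first by move=> [->].
  by rewrite notin_None.
- move=> [x y] /= xt; rewrite /psub dom_pupd cardsU1 xt ct eqxx /=.
  apply/andP; split; first exact: subsetUr.
  apply/forallP => z; apply/implyP => zt; rewrite ffunE.
  by case: (eqVneq z x) => // zx; move: xt; rewrite -zx zt.
- move=> psi /andP [/eqP cpsi /andP [sub /forallP agree]].
  have : #|dom psi :\: dom t| == 1%N.
    by rewrite cardsD (setIidPr sub) ct cpsi subSnn.
  move=> /cards1P [x Dx].
  have : x \in dom psi :\: dom t by rewrite Dx set11.
  rewrite inE => /andP [xt xpsi].
  have [y psix] := in_Some xpsi.
  exists (x, y) => //.
  apply/ffunP => z; rewrite ffunE /=.
  case: (eqVneq z x) => [->|zx] //.
  case: (boolP (z \in dom t)) => zt; first by move/implyP: (agree z) => /(_ zt) /eqP.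
  rewrite (notin_None zt); apply: notin_None; apply/negP => zpsi.
  have : z \in dom psi :\: dom t by rewrite inE zpsi zt.
  by rewrite Dx inE (negbTE zx).
Qed.

End Sums.

Section Del.
Variables (R : realType) (n : nat) (Y : finType).
Local Notation pf := (pfun n Y).

Definition Ep (X : pf -> R) (t : pf) : R :=
  \sum_(i in dom t) \sum_(x | x \notin dom t) \sum_(y : Y) X (pupd (prem t i) x y).

Lemma cap_lem (t : pf) i x : x \notin dom t ->
  (x |: dom t :\ i) :&: dom t = dom t :\ i.
Proof.
move=> xt; apply/setP => z; rewrite !inE.
case: (eqVneq z x) => [->|_] /=; last by rewrite -andbA andbb.
by move: xt; rewrite in_dom negbK => /eqP ->; rewrite andbF.
Qed.

Lemma DelSum (X : pf -> R) (t : pf) j : #|dom t| = j.+1 ->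
  \sum_(phi : pf | [&& #|dom phi| == j.+1, #|dom phi :&: dom t| == j &
                     [forall x in dom phi :&: dom t, phi x == t x]]) X phi = Ep X t.
Proof.
move=> ct; rewrite /Ep.
under [in RHS]eq_bigr do rewrite pair_big_dep.
rewrite [in RHS]pair_big_dep.
apply: sum_bij.
- move=> [i1 [x1 y1]] [i2 [x2 y2]] /andP[/= i1t /andP[x1t _]] /andP[/= i2t /andP[x2t _]] E.
  have E1 := congr1 (fun f : pf => f x1) E; have E2 := congr1 (fun f : pf => f i1) E.
  rewrite /= !ffunE eqxx in E1 E2.
  have ex : x1 = x2.
    case: (eqVneq x1 x2) E1 => // _.
    by rewrite (notin_None x1t); case: ifP.
  subst x2; move: E1; rewrite eqxx => -[<-].
  have ix : (i1 == x1) = false by apply/negP => /eqP ix; move: x1t; rewrite -ix i1t.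
  move: E2; rewrite ix eqxx; case: (eqVneq i1 i2) => [-> //|_].
  by move=> /esym ti1; move: i1t; rewrite in_dom ti1.
- move=> [i [x y]] /andP[/= it /andP[xt _]].
  rewrite dom_pupd dom_prem cap_lem //.
  have cD : #|dom t :\ i| = j by move: ct; rewrite (cardsD1 i) it add1n => -[].
  rewrite cardsU1 cD in_setD1 negb_and xt orbT add1n !eqxx /=.
  apply/forallP => z; apply/implyP; rewrite !inE => /andP [zi zt].
  rewrite !ffunE (negbTE zi); case: (eqVneq z x) => // zx.
  by move: xt; rewrite -zx in_dom zt.
- move=> phi /and3P [/eqP cphi /eqP ccap /forallP agree].
  have : #|dom t :\: dom phi| == 1%N.
    by rewrite cardsD setIC ccap ct subSnn.
  move=> /cards1P [i Di].
  have : #|dom phi :\: dom t| == 1%N.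
    by rewrite cardsD ccap cphi subSnn.
  move=> /cards1P [x Dx].
  have : i \in dom t :\: dom phi by rewrite Di set11.
  rewrite inE => /andP [iphi it].
  have : x \in dom phi :\: dom t by rewrite Dx set11.
  rewrite inE => /andP [xt xphi].
  have [y phix] := in_Some xphi.
  exists (i, (x, y)); first by rewrite /= it xt.
  apply/ffunP => z; rewrite !ffunE /=.
  case: (eqVneq z x) => [->|zx] //.
  case: (eqVneq z i) => [->|zi]; first exact: notin_None.
  case: (boolP (z \in dom phi)) => zphi.
    have zt : z \in dom t.
      apply/negPn/negP => zt.
      have : z \in dom phi :\: dom t by rewrite inE zphi zt.
      by rewrite Dx inE (negbTE zx).
    have zc : z \in dom phi :&: dom t by rewrite inE zphi zt.
    by move/implyP: (agree z) => /(_ zc) /eqP.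
  rewrite (notin_None zphi); symmetry; apply: notin_None; apply/negP => zt.
  have : z \in dom t :\: dom phi by rewrite inE zphi zt.
  by rewrite Di inE (negbTE zi).
Qed.

End Del.

Section Ops.
Variables (R : realType) (n : nat) (Y : finType).
Local Notation pf := (pfun n Y).

Definition Sw (w : Y -> Y -> R) (X : pf -> R) (t : pf) : R :=
  \sum_(j in dom t) \sum_(y : Y) oapp (fun y0 => w y0 y) 0 (t j) * X (pupd t j y).

Lemma Dstar_S (X : pf -> R) (t : pf) j : #|dom t| = j.+1 ->
  Dstar j.+1 X t = \sum_(i in dom t) X (prem t i).
Proof. by move=> ct; rewrite /Dstar ct eqxx /= (SubSum _ ct). Qed.

Lemma Dop_S (X : pf -> R) (t : pf) j : #|dom t| = j ->
  Dop j.+1 X t = \sum_(x | x \notin dom t) \sum_(y : Y) X (pupd t x y).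
Proof. by move=> ct; rewrite /Dop /= ct eqxx (SupSum _ ct). Qed.

Lemma card_pupd (t : pf) j x y : #|dom t| = j -> x \notin dom t -> #|dom (pupd t x y)| = j.+1.
Proof. by move=> ct xt; rewrite dom_pupd cardsU1 xt ct. Qed.

Lemma card_prem (t : pf) j i : #|dom t| = j.+1 -> i \in dom t -> #|dom (prem t i)| = j.
Proof. by move=> ct it; move: ct; rewrite dom_prem (cardsD1 i) it add1n => -[]. Qed.

Lemma card_compl (t : pf) : #|[pred x | x \notin dom t]| = (n - #|dom t|)%N.
Proof.
transitivity (#|'I_n| - #|dom t|)%N; last by rewrite card_ord.
rewrite -(cardsC (dom t)) addKn.
by apply: eq_card => x; rewrite !inE.
Qed.

Lemma DDstar (X : pf -> R) (t : pf) j : #|dom t| = j ->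
  Dop j.+1 (Dstar j.+1 X) t = ((n - j) * #|Y|)%:R * X t + Ep X t.
Proof.
move=> ct; rewrite (Dop_S _ ct).
transitivity (\sum_(x | x \notin dom t) \sum_(y : Y)
   (X t + \sum_(i in dom t) X (pupd (prem t i) x y))).
  apply: eq_bigr => x xt; apply: eq_bigr => y _.
  rewrite (Dstar_S _ (card_pupd y ct xt)) dom_pupd big_setU1 //=.
  rewrite prem_pupd_same prem_notin //; congr (_ + _).
  apply: eq_bigr => i it; rewrite prem_pupdC //.
  by apply/negP => /eqP ix; move: xt; rewrite -ix it.
under eq_bigr do rewrite big_split /=.
rewrite big_split /=; congr (_ + _).
  rewrite sumr_const sumr_const card_compl ct -mulrnA mulr_natl mulnC.
  by rewrite mulnC.
rewrite /Ep; under [LHS]eq_bigr do rewrite exchange_big /=.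
by rewrite [LHS]exchange_big.
Qed.

Lemma Sw1E (X : pf -> R) (t : pf) :
  Sw (fun _ _ => 1) X t = \sum_(j in dom t) \sum_(y : Y) X (pupd t j y).
Proof.
apply: eq_bigr => j jt; apply: eq_bigr => y _.
by have [y0 ->] := in_Some jt; rewrite /= mul1r.
Qed.

Lemma DstarD (X : pf -> R) (t : pf) j : #|dom t| = j ->
  Dstar j (Dop j X) t = Sw (fun _ _ => 1) X t + Ep X t.
Proof.
case: j => [|j] ct.
  have t0 := cards0_eq ct.
  rewrite Sw1E /Ep t0 !big_set0 addr0 /Dstar ct eqxx.
  by apply: big1 => phi _; rewrite /Dop eqxx.
rewrite (Dstar_S _ ct) Sw1E /Ep -big_split /=.
apply: eq_bigr => i it.
rewrite (Dop_S _ (card_prem ct it)) dom_prem.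
have ii : i \notin dom t :\ i by rewrite in_setD1 eqxx.
rewrite (bigD1 i ii) /=; congr (_ + _).
  by apply: eq_bigr => y _; rewrite pupd_prem_same.
apply: eq_bigl => x; rewrite in_setD1 negb_and negbK.
by case: (eqVneq x i) => [->|_] /=; rewrite ?eqxx ?it ?andbT ?andbF.
Qed.

Lemma SwDstar (w : Y -> Y -> R) rho (X : pf -> R) (t : pf) j :
  (forall y0, \sum_(y : Y) w y0 y = rho) -> #|dom t| = j.+1 ->
  Sw w (Dstar j.+1 X) t = rho * Dstar j.+1 X t + Dstar j.+1 (Sw w X) t.
Proof.
move=> wr ct; rewrite !(Dstar_S _ ct) mulr_sumr.
transitivity (\sum_(i in dom t) (rho * X (prem t i) + \sum_(l in dom t | l != i)
   \sum_(y : Y) oapp (fun y0 => w y0 y) 0 (t i) * X (pupd (prem t l) i y))).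
  apply: eq_bigr => i it.
  have [y0 ti] := in_Some it.
  transitivity (\sum_(y : Y) w y0 y * (X (prem t i) +
       \sum_(l in dom t | l != i) X (pupd (prem t l) i y))).
    apply: eq_bigr => y _; rewrite ti /=.
    rewrite (Dstar_S _ _); last by rewrite dom_pupd_in.
    rewrite dom_pupd_in // (bigD1 i it) /= prem_pupd_same; congr (_ * (_ + _)).
    by apply: eq_bigr => l /andP [_ li]; rewrite prem_pupdC.
  under eq_bigr do rewrite mulrDr.
  rewrite big_split /= -mulr_suml wr; congr (_ + _).
  under eq_bigr do rewrite mulr_sumr.
  rewrite exchange_big /=; apply: eq_bigr => l _.
  by rewrite ti.
rewrite big_split /=; congr (_ + _).
rewrite (exchange_big_dep (fun l => l \in dom t)) /=; last by move=> ? ? _ /andP [].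
apply: eq_bigr => l lt; rewrite /Sw dom_prem.
apply: eq_big => [i|i].
  rewrite in_setD1 lt /= andbC; congr (_ && _).
  by rewrite eq_sym.
move=> /and3P [_ _ li]; apply: eq_bigr => y _.
by rewrite ffunE eq_sym (negbTE li).
Qed.

End Ops.

Section Eig.
Variables (R : realType) (Y : finType) (q : Y -> Y -> R).

Lemma qpow_max (f : Y -> R) (fm : R) :
  stochastic_kernel q ->
  (forall y, \sum_(y' : Y) q y y' * f y' = f y) -> (forall y, f y <= fm) ->
  forall t y y', f y = fm -> 0 < qpow q t y y' -> f y' = fm.
Proof.
move=> [q0 q1] hf hm; elim=> [|t IH] y y' fy /=.
  by case: (eqVneq y y') => [<-|] //; rewrite ltxx.
move=> hpos.
have [z qz] : exists z, 0 < q y z * qpow q t z y'.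
  apply/existsP; move: hpos; apply: contraTT; rewrite negb_exists => /forallP hz.
  rewrite -leNgt; apply: sumr_le0 => z _; rewrite leNgt; exact: hz.
have qyz : 0 < q y z.
  rewrite lt_def q0 andbT; apply/eqP => e; by move: qz; rewrite e mul0r ltxx.
have qp : 0 < qpow q t z y' by move: qz; rewrite pmulr_rgt0.
apply: (IH z) => //.
have s0 : \sum_(z : Y) q y z * (fm - f z) = 0.
  under eq_bigr do rewrite mulrBr.
  by rewrite sumrB -mulr_suml q1 mul1r hf fy subrr.
have : q y z * (fm - f z) = 0.
  apply: (psumr_eq0P _ s0) => // i _; by rewrite mulr_ge0 // subr_ge0.
move=> /eqP; rewrite mulf_eq0 (gt_eqF qyz) /= subr_eq0 => /eqP ->. done.
Qed.

Lemma harm_const (f : Y -> R) :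
  stochastic_kernel q -> irreducible_kernel q ->
  (forall y, \sum_(y' : Y) q y y' * f y' = f y) -> forall y y', f y = f y'.
Proof.
move=> st irr hf y0.
case: (@arg_maxP _ _ _ y0 xpredT f isT) => ym _ Hm.
have hm : forall y, f y <= f ym by move=> y; exact: Hm.
have all : forall y, f y = f ym.
  move=> y; have [t ht] := irr ym y; exact: (qpow_max st hf hm (erefl _) ht).
by move=> y'; rewrite !all.
Qed.

Lemma ev1_prop (m : nat) (lam : 'I_m.+1 -> R) :
  symmetric_kernel q -> stochastic_kernel q -> irreducible_kernel q ->
  injective lam -> lam ord0 = 1 ->
  forall i f, W q lam i f -> forall y0,
    \sum_(y : Y) 1 * f y = (if i == ord0 then #|Y|%:R else 0) * f y0.
Proof.
move=> sym st irr inj l0 i f hW y0.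
under eq_bigr do rewrite mul1r.
case: (eqVneq i ord0) => [ei|ni].
  subst i.
  have hf : forall y, \sum_(y' : Y) q y y' * f y' = f y.
    by move=> y; have := hW y; rewrite /Qop l0 mul1r.
  have c := harm_const st irr hf.
  under eq_bigr do rewrite (c _ y0).
  by rewrite sumr_const mulr_natl.
rewrite mul0r.
have e : \sum_(y : Y) Qop q f y = lam i * \sum_(y : Y) f y.
  by rewrite mulr_sumr; apply: eq_bigr => y _; rewrite hW.
have e2 : \sum_(y : Y) Qop q f y = \sum_(y : Y) f y.
  rewrite /Qop exchange_big /=; apply: eq_bigr => y' _.
  rewrite -mulr_suml.
  under eq_bigr do rewrite sym.
  by case: st => _ ->; rewrite mul1r.
move: e; rewrite e2 => /eqP; rewrite -subr_eq0 -{1}(mul1r (\sum_y f y)) -mulrBl.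
rewrite mulf_eq0 => /orP [|/eqP //].
rewrite subr_eq0 -l0 => /eqP /inj ie; by move: ni; rewrite -ie eqxx.
Qed.

End Eig.

Section Fund.
Variables (R : realType) (n : nat) (Y : finType) (q : Y -> Y -> R).
Variables (m : nat) (lam : 'I_m.+1 -> R).
Local Notation pf := (pfun n Y).

Lemma fund_Sw (w : Y -> Y -> R) (ev : 'I_m.+1 -> R) c (A : {set 'I_n}) (F : pf -> R) :
  (forall i f, W q lam i f -> forall y0, \sum_(y : Y) w y0 y * f y = ev i * f y0) ->
  fundamental q lam c A F -> forall t, Sw w F t = (\sum_i (c i)%:R * ev i) * F t.
Proof.
move=> hw [iota [Fj [hW [hc hF]]]] t.
have sumev : \sum_(x in A) ev (iota x) = \sum_i (c i)%:R * ev i.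
  rewrite (partition_big iota xpredT) //=; apply: eq_bigr => i _.
  rewrite (eq_bigr (fun=> ev i)); last by move=> x /andP [_ /eqP ->].
  rewrite sumr_const -hc mulr_natl; congr (_ *+ _).
  by apply: eq_card => x; rewrite !inE.
rewrite /Sw -sumev hF.
case: (eqVneq (dom t) A) => [dA|nA].
  rewrite mulr_suml; apply: eq_big => [x|j jt]; first by rewrite dA.
  have jA : j \in A by rewrite -dA.
  have [y0 tj] := in_Some jt.
  rewrite tj /=.
  transitivity (\sum_(y : Y) w y0 y * Fj j y *
                 \prod_(x in A | x != j) oapp (Fj x) 0 (t x)).
    apply: eq_bigr => y _; rewrite hF dom_pupd_in // dA eqxx (bigD1 j jA) /=.
    rewrite ffunE eqxx /= mulrA; congr (_ * _); apply: eq_bigr => x /andP [_ xj].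
    by rewrite ffunE (negbTE xj).
  rewrite -mulr_suml (hw (iota j) (Fj j) (hW j jA)) (bigD1 j jA) /= tj /= !mulrA.
  by [].
rewrite mulr0; apply: big1 => j jt; apply: big1 => y _.
by rewrite hF dom_pupd_in // (negbTE nA) mulr0.
Qed.

Lemma Sw_sum (w : Y -> Y -> R) N (coef : 'I_N -> R) (H : 'I_N -> pf -> R) (G : pf -> R) :
  (forall t, G t = \sum_i coef i * H i t) ->
  forall t, Sw w G t = \sum_i coef i * Sw w (H i) t.
Proof.
move=> hG; have -> : G = fun t => \sum_i coef i * H i t by apply: functional_extensionality.
move=> t; rewrite /Sw.
under eq_bigr do under eq_bigr do rewrite mulr_sumr.
under eq_bigr do rewrite exchange_big /=.
rewrite exchange_big /=; apply: eq_bigr => i _.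
rewrite mulr_sumr; apply: eq_bigr => j _; rewrite mulr_sumr; apply: eq_bigr => y _.
by rewrite mulrCA.
Qed.

Lemma Ptype_Sw (w : Y -> Y -> R) (ev : 'I_m.+1 -> R) k c (G : pf -> R) :
  (forall i f, W q lam i f -> forall y0, \sum_(y : Y) w y0 y * f y = ev i * f y0) ->
  Ptype q lam k c G -> forall t, Sw w G t = (\sum_i (c i)%:R * ev i) * G t.
Proof.
move=> hw [N [coef [H [hH hG]]]] t.
rewrite (Sw_sum _ hG) hG mulr_sumr; apply: eq_bigr => i _.
have [A [_ fA]] := hH i.
by rewrite (fund_Sw hw fA) mulrCA.
Qed.

Lemma Ptype_supp k c (G : pf -> R) :
  Ptype q lam k c G -> forall t, #|dom t| != k -> G t = 0.
Proof.
move=> [N [coef [H [hH hG]]]] t ct; rewrite hG; apply: big1 => i _.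
have [A [cA [iota [Fj [_ [_ hF]]]]]] := hH i.
rewrite hF; case: (eqVneq (dom t) A) => [e|_]; last by rewrite mulr0.
by move: ct; rewrite e cA eqxx.
Qed.

End Fund.

Section Chain.
Variables (R : realType) (n : nat) (Y : finType) (q : Y -> Y -> R).
Variables (m : nat) (lam : 'I_m.+1 -> R) (k : nat).
Local Notation pf := (pfun n Y).
Local Notation one := (fun _ _ : Y => (1 : R)).

Hypothesis H1 : forall i f, W q lam i f -> forall y0,
    \sum_(y : Y) 1 * f y = (if i == ord0 then #|Y|%:R else 0) * f y0.
Hypothesis rq : forall y0, \sum_(y : Y) q y0 y = 1.
Hypothesis l0 : lam ord0 = 1.

Lemma Hq i f : W q lam i f -> forall y0, \sum_(y : Y) q y0 y * f y = lam i * f y0.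
Proof. by move=> hW y0; rewrite -hW. Qed.

Lemma r1 (y0 : Y) : \sum_(y : Y) (1 : R) = #|Y|%:R.
Proof. by rewrite sumr_const. Qed.

Lemma ev1sum (c : 'I_m.+1 -> nat) :
  \sum_i (c i)%:R * (if i == ord0 then #|Y|%:R else 0 : R) = (c ord0)%:R * #|Y|%:R.
Proof.
rewrite (bigD1 ord0) //= ?eqxx big1 ?addr0 // => i /negbTE ->; by rewrite mulr0.
Qed.

Definition sig (c : 'I_m.+1 -> nat) : R := \sum_i (c i)%:R * lam i.

Lemma sig_tdecr (c : 'I_m.+1 -> nat) : c ord0 != 0%N -> sig c = 1 + sig (tdecr c).
Proof.
move=> c0; rewrite /sig (bigD1 ord0) //= [in RHS](bigD1 ord0) //= /tdecr eqxx l0.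
rewrite addrA; congr (_ + _).
  by case: (c ord0) c0 => // c' _ /=; rewrite -addn1 natrD; ring.
by apply: eq_bigr => i /negbTE ->.
Qed.

Lemma Sw_supp w (X : pf -> R) L : (forall t, #|dom t| != L -> X t = 0) ->
  forall t, #|dom t| != L -> Sw w X t = 0.
Proof.
move=> hX t ct; apply: big1 => j jt; apply: big1 => y _.
by rewrite hX ?mulr0 // dom_pupd_in.
Qed.

Lemma Dstar_scale j (Z G : pf -> R) a : (forall t, Z t = a * G t) ->
  forall t, Dstar j Z t = a * Dstar j G t.
Proof.
move=> hZ t; rewrite /Dstar; case: ifP => _; last by rewrite mulr0.
by rewrite mulr_sumr; apply: eq_bigr => phi _.
Qed.

Lemma Dop0 j (t : pf) : Dop j (fun _ : pf => (0 : R)) t = 0.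
Proof. by rewrite /Dop; case: ifP => // _; case: ifP => // _; rewrite big1. Qed.

Lemma Dstar0 j (t : pf) : Dstar j (fun _ : pf => (0 : R)) t = 0.
Proof. by rewrite /Dstar; case: ifP => // _; rewrite big1. Qed.

Lemma Sw0 w (t : pf) : Sw w (fun _ : pf => (0 : R)) t = 0.
Proof. by apply: big1 => j _; apply: big1 => y _; rewrite mulr0. Qed.

Lemma card_le (t : pf) : (#|dom t| <= n)%N.
Proof. by rewrite -[X in (_ <= X)%N]card_ord max_card. Qed.

Lemma chain d : forall c (X : pf -> R), Pdef q lam k d c X ->
  [/\ (forall t, #|dom t| != (k + d)%N -> X t = 0),
      (forall t, Sw one X t = (c ord0)%:R * #|Y|%:R * X t),
      (forall t, Sw q X t = sig c * X t) &
      (forall t, #|dom t| = (k + d)%N -> Dstar (k + d) (Dop (k + d) X) t =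
          #|Y|%:R * d%:R * (n%:R - k%:R - (c ord0)%:R + 1) * X t)].
Proof.
elim: d => [|d IH] c X /=.
  move=> [hP hD]; rewrite addn0; split.
  - exact: Ptype_supp hP.
  - by move=> t; rewrite (Ptype_Sw H1 hP) ev1sum.
  - by move=> t; rewrite (Ptype_Sw Hq hP).
  - move=> t _; rewrite mulr0 mul0r mul0r /Dstar; case: ifP => // _.
    by rewrite big1.
case: eqP => [c0 hz|c0 [G [hG hX]]].
  have -> : X = fun _ => 0 by apply: functional_extensionality.
  split => t; rewrite ?mulr0 ?Sw0 //.
  move=> _; rewrite /Dstar; case: ifP => // _; rewrite big1 // => phi _.
  exact: Dop0.
have [suppG S1G SqG DDG] := IH _ _ hG.
have eX : X = Dstar (k + d).+1 G by apply: functional_extensionality => t; rewrite hX addnS.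
subst X; rewrite addnS.
split.
- by move=> t ct; rewrite /Dstar (negbTE ct).
- move=> t; case: (eqVneq #|dom t| (k + d).+1) => ct; last first.
    rewrite (Sw_supp _ _ ct); last by move=> t' ct'; rewrite /Dstar (negbTE ct').
    by rewrite /Dstar (negbTE ct) mulr0.
  rewrite (SwDstar _ r1 ct) (Dstar_scale _ S1G) /tdecr eqxx.
  case: (c ord0) c0 => // c' _ /=.
  rewrite -[c'.+1]addn1 natrD; ring.
- move=> t; case: (eqVneq #|dom t| (k + d).+1) => ct; last first.
    rewrite (Sw_supp _ _ ct); last by move=> t' ct'; rewrite /Dstar (negbTE ct').
    by rewrite /Dstar (negbTE ct) mulr0.
  rewrite (SwDstar _ rq ct) (Dstar_scale _ SqG) (sig_tdecr (introN eqP c0)).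
  ring.
- move=> t ct.
  set co := (#|Y|%:R * (d.+1)%:R * (n%:R - k%:R - (c ord0)%:R + 1) : R).
  rewrite (Dstar_S _ ct) [X in _ = co * X](Dstar_S _ ct) mulr_sumr.
  apply: eq_bigr => i it.
  have cp := card_prem ct it.
  rewrite (DDstar _ cp).
  have e := DstarD G cp.
  rewrite DDG // S1G in e.
  have -> : Ep G (prem t i) = Dstar (k + d) (Dop (k + d) G) (prem t i) - Sw one G (prem t i).
    by rewrite DstarD // addrC addKr.
  rewrite DDG // S1G /co /tdecr eqxx.
  have hn : (k + d <= n)%N by rewrite -cp card_le.
  rewrite natrM natrB // natrD.
  case: (c ord0) c0 => // c' _ /=.
  rewrite -[c'.+1]addn1 -[d.+1]addn1 !natrD; ring.
Qed.

End Chain.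

Unset Implicit Arguments.

Theorem theorem7p14 (R : realType) (n : nat) (Y : finType) (q : Y -> Y -> R)
  (m : nat) (lam : 'I_m.+1 -> R) (h : nat) (p0 : R)
  (a : 'I_m.+1 -> nat) (k : nat) (F : pfun n Y -> R) :
  (2 <= n)%N ->
  symmetric_kernel q -> stochastic_kernel q -> irreducible_kernel q ->
  injective lam -> lam ord0 = 1 ->
  (forall i, is_eigenvalue q (lam i)) ->
  (forall l, is_eigenvalue q l -> exists i, lam i = l) ->
  (1 <= h)%N -> (h <= n - 1)%N -> 0 < p0 -> p0 < 1 ->
  type_size a = h -> (ell a <= k)%N -> (k <= h)%N ->
  Phck q lam h a k F ->
  forall t : pfun n Y,
    crestedP q h p0 F t =
    (p0 * (h%:R^-1 * \sum_(j < m.+1) (a j)%:R * lam j)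
     + (1 - p0) * (((n%:R + (ell a)%:R - k%:R - h%:R) * (h%:R - k%:R + 1) - (n%:R - h%:R))
                   / (h%:R * (n%:R - h%:R)))) * F t.
Proof.
move=> n2 sym st irr inj l0 eig _ h1 hn _ _ ts _ hk HP t.
have H1 := ev1_prop sym st irr inj l0.
have rq : forall y0, \sum_(y : Y) q y0 y = 1 by case: st.
have [supp S1 Sq DD] := chain H1 rq l0 HP.
have e : (k + (h - k))%N = h by rewrite subnKC.
rewrite e in supp DD.
have Ypos : (0 < #|Y|)%N.
  have [f [[y _] _]] := eig ord0; by apply/card_gt0P; exists y.
have hlt : (h < n)%N by lia.
have ela : (a ord0 + ell a)%N = h.
  by rewrite -ts /type_size /ell [RHS](bigD1 ord0).
case: (eqVneq #|dom t| h) => ct; last first.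
  rewrite /crestedP /Mop /Deltaop (negbTE ct) supp // !mulr0; ring.
rewrite /crestedP.
have ct' : #|dom t| = h.-1.+1 by rewrite prednK.
have -> : Deltaop h F t = Ep F t.
  by have := DelSum F ct'; rewrite prednK // => <-; rewrite /Deltaop ct eqxx.
have -> : Ep F t = Dstar h (Dop h F) t - Sw (fun _ _ => 1) F t.
  by rewrite (DstarD _ ct) addrC addKr.
have -> : Mop q h F t = h%:R^-1 * Sw q F t by rewrite /Mop ct eqxx.
rewrite DD // S1 Sq /sig.
have el : (ell a)%:R = h%:R - (a ord0)%:R :> R by rewrite -ela natrD addrC addKr.
have hn2 : (h <= n)%N := ltnW hlt.
rewrite el !natrM !natrB //.
have hR : h%:R != 0 :> R by rewrite pnatr_eq0 -lt0n.
have nh : n%:R - h%:R != 0 :> R by rewrite subr_eq0 eqr_nat gtn_eqF.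
have Yc : #|Y|%:R != 0 :> R by rewrite pnatr_eq0 -lt0n.
set S := \sum_(i < m.+1) _.
field.
by rewrite hR nh Yc.
Qed.
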